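(* Let $\mathcal S=(\mathcal P,\mathcal L)$ be a linear space with $v$ points and constant line size $k$, $2<k<v$; let $G\le\mathrm{Aut}(\mathcal S)$ be transitive on lines, and let $\mathfrak C$ be a non-trivial $G$-invariant partition of $\mathcal P$ with $d$ classes of size $c$; let $C\in\mathfrak C$ and let $G^C$ be the permutation group induced on $C$ by its setwise stabiliser $G_C$. (i) If $G^C$ is $3$-homogeneous, then $\mathrm{spec}\,\mathcal S=\{1,2\}$. (ii) If $G^C$ is $2$-homogeneous, then $\mathrm{spec}\,\mathcal S=\{1,h\}$ for some $h\ge2$.
   Context: A linear space: a finite set $\mathcal P$ of points and a set $\mathcal L$ of subsets (lines) such that any two distinct points lie on exactly one line and each line has at least two points. For a line $\lambda$ and $i\ge0$, $d_i$ is the number of classes $C\in\mathfrak C$ with $|C\cap\lambda|=i$ (independent of $\lambda$); $\mathrm{spec}\,\mathcal S=\{i>0:d_i\ne0\}$. A permutation group is $t$-homogeneous if it is transitive on $t$-element subsets. *)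

(* Defs.v *)
From mathcomp Require Import all_boot all_fingroup.
Set Implicit Arguments. Unset Strict Implicit. Unset Printing Implicit Defensive.

Definition linear_space (P : finType) (L : {set {set P}}) : Prop :=
  (forall l, l \in L -> 2 <= #|l|) /\
  (forall x y : P, x != y -> exists! l, l \in L /\ x \in l /\ y \in l).

Definition is_aut (P : finType) (L : {set {set P}}) (g : {perm P}) : Prop :=
  forall l, l \in L -> g @: l \in L.

Definition line_transitive (P : finType) (L : {set {set P}})
  (G : {group {perm P}}) : Prop :=
  forall l1 l2, l1 \in L -> l2 \in L -> exists2 g, g \in G & g @: l1 = l2.

Definition G_invariant_partition (P : finType) (G : {group {perm P}})
  (Cl : {set {set P}}) : Prop :=
  partition Cl [set: P] /\ forall g C, g \in G -> C \in Cl -> g @: C \in Cl.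

Definition induced_homogeneous (P : finType) (G : {group {perm P}})
  (C : {set P}) (t : nat) : Prop :=
  forall A B : {set P}, A \subset C -> B \subset C -> #|A| = t -> #|B| = t ->
    exists2 g, g \in G & g @: C = C /\ g @: A = B.

Definition d_i (P : finType) (Cl : {set {set P}}) (lam : {set P}) (i : nat) : nat :=
  #|[set C in Cl | #|C :&: lam| == i]|.

Definition in_spec (P : finType) (Cl : {set {set P}}) (lam : {set P}) (i : nat) : bool :=
  (0 < i) && (d_i Cl lam i != 0).

(* Main.v *)
Require Import Defs.
From mathcomp Require Import all_boot all_fingroup.
From mathcomp Require Import zify.
Set Implicit Arguments. Unset Strict Implicit. Unset Printing Implicit Defensive.

Lemma dc (P : finType) (A : {set {set P}}) (S : {set P}) :
  \sum_(l in A) #|l :&: S| = \sum_(y in S) #|[set l in A | y \in l]|.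
Proof.
transitivity (\sum_(l in A) \sum_(y in S) (y \in l : nat)).
  apply: eq_bigr => l _; rewrite -sum1_card big_mkcond [RHS]big_mkcond /=.
  by apply: eq_bigr => y _; rewrite !inE; case: (y \in l); case: (y \in S).
rewrite exchange_big; apply: eq_bigr => y _.
rewrite -sum1_card big_mkcond [RHS]big_mkcond /=.
by apply: eq_bigr => l _; rewrite !inE; case: (y \in l); case: (l \in A).
Qed.

Lemma line_uniq (P : finType) (L : {set {set P}}) l1 l2 x y :
  linear_space L -> l1 \in L -> l2 \in L -> x != y ->
  x \in l1 -> y \in l1 -> x \in l2 -> y \in l2 -> l1 = l2.
Proof.
move=> [_ H] L1 L2 xy x1 y1 x2 y2.
have [l [_ U]] := H x y xy.
by rewrite -(U l1) ?(U l2).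
Qed.

Lemma meet_le1 (P : finType) (L : {set {set P}}) l1 l2 :
  linear_space L -> l1 \in L -> l2 \in L -> l1 != l2 -> #|l1 :&: l2| <= 1.
Proof.
move=> LS L1 L2 ne; rewrite leqNgt; apply/negP => /card_gt1P [x [y [xi yi xy]]].
move: xi yi; rewrite !inE => /andP[x1 x2] /andP[y1 y2].
by move/eqP: ne; apply; apply: line_uniq LS L1 L2 xy x1 y1 x2 y2.
Qed.

Lemma pair_lines (P : finType) (L : {set {set P}}) x y :
  linear_space L -> x != y -> #|[set l in L | x \in l & y \in l]| = 1.
Proof.
move=> LS xy; have [_ H] := LS; have [l [[lL [xl yl]] _]] := H x y xy.
apply/eqP/cards1P; exists l; apply/setP => l'; rewrite !inE.
apply/idP/eqP => [/and3P[l'L xl' yl'] | ->]; last by rewrite lL xl yl.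
exact: line_uniq LS l'L lL xy xl' yl' xl yl.
Qed.

Definition lines (P : finType) (L : {set {set P}}) x := [set l in L | x \in l].

Lemma sum_at (P : finType) (L : {set {set P}}) x (S : {set P}) :
  linear_space L ->
  \sum_(l in lines L x) #|l :&: (S :\ x)| = #|S :\ x|.
Proof.
move=> LS; rewrite dc -sum1_card; apply: eq_bigr => y.
rewrite !inE => /andP[yx _].
rewrite -(pair_lines LS (y:=y) (x:=x)) 1?eq_sym //; apply: eq_card => l.
by rewrite !inE andbA.
Qed.

Lemma cardD1in (P : finType) (A : {set P}) x : x \in A -> #|A :\ x| = #|A| - 1.
Proof. by move=> xA; rewrite (cardsD1 x A) xA add1n subSS subn0. Qed.

Lemma cardD1out (P : finType) (A : {set P}) x : x \notin A -> #|A :\ x| = #|A|.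
Proof. by move=> xA; rewrite (cardsD1 x A) (negbTE xA). Qed.

Lemma setID1 (P : finType) (A S : {set P}) x : A :&: (S :\ x) = (A :&: S) :\ x.
Proof. by apply/setP => y; rewrite !inE; case: (y == x); case: (y \in A). Qed.

Lemma line_missing (P : finType) (L : {set {set P}}) k :
  linear_space L -> (forall l, l \in L -> #|l| = k) -> 2 < k -> k < #|P| ->
  forall x, exists2 l, l \in L & x \notin l.
Proof.
move=> LS Lk k2 kP x.
have : 1 < #|[set: P]| by rewrite cardsT; apply: ltn_trans (ltnW k2) kP.
case/card_gt1P => a [b [_ _ ab]].
have [_ H] := LS; have [l0 [[l0L [al0 bl0]] _]] := H a b ab.
case xl0: (x \in l0); last by exists l0 => //; rewrite xl0.
have : 0 < #|~: l0|.
  have := cardsC l0; rewrite Lk // => E; rewrite -(ltn_add2l k) addn0 E //.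
case/card_gt0P => z; rewrite inE => zl0.
have : 0 < #|l0 :\ x| by rewrite cardD1in // Lk // subn_gt0 ltnW.
case/card_gt0P => w; rewrite !inE => /andP[wx wl0].
have zw : z != w by apply: contraNneq zl0 => ->.
have [l [[lL [zl wl]] _]] := H z w zw.
exists l => //; apply/negP => xl.
have := line_uniq LS lL l0L wx wl xl wl0 xl0; move=> E; by rewrite -E zl in zl0.
Qed.

Lemma fisher (P : finType) (L : {set {set P}}) k :
  linear_space L -> (forall l, l \in L -> #|l| = k) -> 2 < k -> k < #|P| ->
  forall x, k <= #|lines L x|.
Proof.
move=> LS Lk k2 kP x.
have [l lL xl] := line_missing LS Lk k2 kP x.
rewrite -(Lk l lL) -(cardD1out xl) -(sum_at x l LS) -sum1_card.
apply: leq_sum => m; rewrite inE => /andP[mL xm].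
apply: leq_trans (meet_le1 LS mL lL _); first by apply: subset_leq_card; apply: setIS; apply: subD1set.
by apply: contraNneq xl => <-.
Qed.

Lemma r_eq (P : finType) (L : {set {set P}}) k :
  linear_space L -> (forall l, l \in L -> #|l| = k) ->
  forall x, #|lines L x| * (k - 1) = #|P| - 1.
Proof.
move=> LS Lk x.
rewrite -cardsT -(@cardD1in _ setT x (in_setT x)) -(sum_at x setT LS) -sum_nat_const.
apply: eq_bigr => m; rewrite inE => /andP[mL xm].
by rewrite setID1 setIT cardD1in // Lk.
Qed.

Lemma card_imI (P : finType) (g : {perm P}) (A B : {set P}) :
  #|g @: A :&: g @: B| = #|A :&: B|.
Proof. by rewrite -imsetI; [rewrite card_imset //; apply: perm_inj | move=> a b _ _; apply: perm_inj]. Qed.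

Lemma imK (P : finType) (g : {perm P}) (A : {set P}) : (g^-1)%g @: (g @: A) = A.
Proof. by rewrite -imset_comp (eq_imset _ (fun a => permK g a)) imset_id. Qed.

Lemma imKV (P : finType) (g : {perm P}) (A : {set P}) : g @: ((g^-1)%g @: A) = A.
Proof. by have := imK (g^-1)%g A; rewrite invgK. Qed.

Lemma setD1out (P : finType) (A : {set P}) y : y \notin A -> A :\ y = A.
Proof. by move=> yA; apply/setP => z; rewrite !inE; case: eqP => // ->; rewrite (negbTE yA). Qed.

Lemma pt_trans (P : finType) (L : {set {set P}}) k (G : {group {perm P}}) :
  linear_space L -> (forall l, l \in L -> #|l| = k) -> 2 < k -> k < #|P| ->
  (forall g, g \in G -> is_aut L g) -> line_transitive L G ->
  forall x y, exists2 g, g \in G & g x = y.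
Proof.
move=> LS Lk k2 kP aut LT x y.
pose O := [set (g : {perm P}) x | g in G].
case yO: (y \in O); first by case/imsetP: yO => g gG ->; exists g.
exfalso.
have xO : x \in O by apply/imsetP; exists 1%g; rewrite ?group1 ?perm1.
have stab : forall g, g \in G -> g @: O = O.
  move=> g gG; apply/eqP; rewrite eqEcard card_imset ?leqnn ?andbT; last exact: perm_inj.
  apply/subsetP => z /imsetP [w /imsetP [h hG ->] ->].
  by apply/imsetP; exists (h * g)%g; rewrite ?groupM ?permM.
have : 0 < #|lines L x| by apply: leq_trans (fisher LS Lk k2 kP x); apply: ltnW; apply: ltn_trans k2.
case/card_gt0P => l0; rewrite inE => /andP[l0L xl0].
set m := #|l0 :&: O|.
have mc : forall l, l \in L -> #|l :&: O| = m.
  move=> l lL; have [g gG <-] := LT l0 l l0L lL.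
  by rewrite -{1}(stab g gG) card_imI.
have Ex : #|lines L x| * (m - 1) = #|O| - 1.
  rewrite -(cardD1in xO) -(sum_at x O LS) -sum_nat_const.
  apply: eq_bigr => l; rewrite inE => /andP[lL xl].
  by rewrite setID1 cardD1in ?mc // inE xl.
have Ey : #|lines L y| * m = #|O|.
  rewrite -[in RHS](setD1out (negbT yO)) -(sum_at y O LS) -sum_nat_const.
  apply: eq_bigr => l; rewrite inE => /andP[lL yl].
  by rewrite setD1out ?mc // yO.
have Exy : #|lines L x| = #|lines L y|.
  apply/eqP; rewrite -(@eqn_pmul2r (k - 1)); last by rewrite subn_gt0 ltnW.
  by rewrite !(r_eq LS Lk).
have O1 : 0 < #|O| by apply/card_gt0P; exists x.
have r1 : #|lines L x| = 1.
  rewrite Exy; rewrite Exy in Ex; move: Ex Ey O1; clear mc.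
  set r := #|lines L y|; set o := #|O|; case: m => [|m']; first by move=> _ <-; rewrite muln0.
  rewrite subSS subn0 mulnS; move: (r * m') => t; lia.
have := r_eq LS Lk x; rewrite r1 mul1n => E.
by move: kP k2 E; lia.
Qed.

Lemma cl_trans (P : finType) (G : {group {perm P}}) (Cl : {set {set P}}) c C D :
  G_invariant_partition G Cl -> (forall x y, exists2 g, g \in G & g x = y) ->
  (forall D, D \in Cl -> #|D| = c) -> 0 < c -> C \in Cl -> D \in Cl ->
  exists2 g, g \in G & g @: C = D.
Proof.
move=> [pCl inv] pt Cc c0 CCl DCl.
have : 0 < #|C| by rewrite Cc. case/card_gt0P => x xC.
have : 0 < #|D| by rewrite Cc. case/card_gt0P => y yD.
have [g gG gxy] := pt x y.
exists g => //.
have tI : trivIset Cl by case/and3P: pCl.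
have yg : y \in g @: C by rewrite -gxy; apply: imset_f.
by rewrite -(def_pblock tI (inv g C gG CCl) yg) (def_pblock tI DCl yD).
Qed.

Lemma cardP (P : finType) (Cl : {set {set P}}) c d :
  partition Cl [set: P] -> #|Cl| = d -> (forall D, D \in Cl -> #|D| = c) ->
  #|P| = d * c.
Proof.
move=> pCl Cd Cc; rewrite -cardsT (card_partition pCl) -Cd -sum_nat_const.
by apply: eq_bigr => D /Cc.
Qed.

Lemma no_full (P : finType) (L : {set {set P}}) (k : nat)
  (G : {group {perm P}}) (Cl : {set {set P}}) (c d : nat) (C lam : {set P}) :
  linear_space L ->
  (forall l, l \in L -> #|l| = k) ->
  2 < k -> k < #|P| ->
  (forall g, g \in G -> is_aut L g) ->
  line_transitive L G ->
  G_invariant_partition G Cl ->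
  #|Cl| = d -> (forall D, D \in Cl -> #|D| = c) ->
  1 < c -> 1 < d ->
  C \in Cl -> lam \in L -> C \subset lam -> False.
Proof.
move=> LS Lk k2 kP aut LT [pCl inv] Cd Cc c1 d1 CCl lamL Clam.
have every : forall l, l \in L -> exists2 D, D \in Cl & D \subset l.
  move=> l lL; have [g gG <-] := LT lam l lamL lL.
  by exists (g @: C); [apply: inv | apply: imsetS].
pose f (l : {set P}) := odflt set0 [pick D in Cl | D \subset l].
have fP : forall l, l \in L -> f l \in Cl /\ f l \subset l.
  move=> l lL; rewrite /f; case: pickP => [D /andP[] //|none].
  by have [D DCl Dl] := every l lL; have := none D; rewrite DCl Dl.
have finj : {in L &, injective f}.
  move=> l1 l2 l1L l2L E.
  have [F1 S1] := fP l1 l1L; have [_ S2] := fP l2 l2L.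
  have : 1 < #|f l1| by rewrite Cc.
  case/card_gt1P => x [y [xf yf xy]].
  rewrite -E in S2.
  by apply: (line_uniq LS l1L l2L xy); [apply: (subsetP S1) | apply: (subsetP S1) | apply: (subsetP S2) | apply: (subsetP S2)].
have bL : #|L| <= d.
  rewrite -Cd -(card_in_imset finj); apply: subset_leq_card.
  by apply/subsetP => _ /imsetP [l lL ->]; case: (fP l lL).
have flags := dc L [set: P].
have : #|L| * k >= #|P| * k.
  rewrite -sum_nat_const -cardsT -sum_nat_const.
  rewrite (eq_bigr (fun l => #|l :&: [set: P]|)); last by move=> l lL; rewrite setIT Lk.
  rewrite flags; apply: leq_sum => y _; exact: (fisher LS Lk k2 kP y).
rewrite leq_pmul2r; last by apply: ltn_trans k2.
rewrite (cardP pCl Cd Cc) => H.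
by move: (leq_trans H bL); nia.
Qed.

Lemma core (P : finType) (L : {set {set P}}) (k : nat) (c d h : nat) (C : {set P}) x :
  linear_space L ->
  (forall l, l \in L -> #|l| = k) ->
  2 < k -> k < #|P| -> #|P| = d * c -> 1 < d -> #|C| = c -> x \in C -> 2 <= h ->
  (forall l, l \in L -> x \in l -> #|l :&: C| = h) -> False.
Proof.
move=> LS Lk k2 kP vP d1 Cc xC h2 H.
have rk := fisher LS Lk k2 kP x.
set r := #|lines L x| in rk.
have E1 : r * (h - 1) = c - 1.
  rewrite -Cc -(cardD1in xC) -(sum_at x C LS) -sum_nat_const.
  apply: eq_bigr => l; rewrite inE => /andP[lL xl].
  by rewrite setID1 cardD1in ?H // inE xl.
have xnC : x \notin ~: C by rewrite inE negbK.
have E2 : r * (k - h) = #|P| - c.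
  have := cardsC C; rewrite Cc => EC.
  rewrite -[#|P|]EC addKn -[in RHS](setD1out xnC) -(sum_at x (~: C) LS) -sum_nat_const.
  apply: eq_bigr => l; rewrite inE => /andP[lL xl].
  rewrite setD1out // -setDE -(H l lL xl) -(Lk l lL) -(cardsID C l) addKn //.
have c0 : 0 < c by rewrite -Cc; apply/card_gt0P; exists x.
have rc : r <= c - 1 by rewrite -E1 leq_pmulr // subn_gt0.
have cop : coprime c r.
  have -> : c = (h - 1) * r + 1 by rewrite mulnC E1; lia.
  by rewrite -coprime_modl modnMDl coprime_modl coprime1n.
have dv : c %| k - h.
  rewrite -(Gauss_dvdr _ cop) E2 vP.
  by rewrite dvdn_sub ?dvdn_mull.
have kh : 0 < k - h.
  rewrite lt0n; apply/negP => /eqP kh0; move: E2; rewrite kh0 muln0 vP; nia.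
have := dvdn_leq kh dv.
lia.
Qed.

Lemma specP (P : finType) (Cl : {set {set P}}) lam i :
  in_spec Cl lam i = (0 < i) && [exists D in Cl, #|D :&: lam| == i].
Proof.
rewrite /in_spec /d_i; congr (_ && _).
rewrite cards_eq0; apply/set0Pn/existsP => [[D]|[D]]; rewrite ?inE => H; by exists D; rewrite ?inE.
Qed.

Lemma mainM (P : finType) (L : {set {set P}}) (k : nat)
  (G : {group {perm P}}) (Cl : {set {set P}}) (c d h : nat) (C : {set P}) :
  linear_space L ->
  (forall l, l \in L -> #|l| = k) ->
  2 < k -> k < #|P| ->
  (forall g, g \in G -> is_aut L g) ->
  line_transitive L G ->
  G_invariant_partition G Cl ->
  #|Cl| = d -> (forall D, D \in Cl -> #|D| = c) ->
  1 < c -> 1 < d ->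
  C \in Cl -> 2 <= h ->
  (forall l, l \in L -> 2 <= #|l :&: C| -> #|l :&: C| = h) ->
  forall lam, lam \in L -> forall i, in_spec Cl lam i = (i == 1) || (i == h).
Proof.
move=> LS Lk k2 kP aut LT [pCl inv] Cd Cc c1 d1 CCl h2 Q lam lamL i.
have pt := pt_trans LS Lk k2 kP aut LT.
have QD : forall D, D \in Cl -> forall l, l \in L -> 2 <= #|D :&: l| -> #|D :&: l| = h.
  move=> D DCl l lL.
  have [g gG <-] := cl_trans (conj pCl inv) pt Cc (ltnW c1) CCl DCl.
  have mL : (g^-1)%g @: l \in L by apply: aut => //; rewrite groupV.
  rewrite -{1 2}(imKV g l) card_imI setIC; exact: Q.
have [x [y [xC yC xy]]] : exists x y, [/\ x \in C, y \in C & x != y].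
  by apply/card_gt1P; rewrite Cc.
have [_ HL] := LS; have [mu [[muL [xmu ymu]] _]] := HL x y xy.
have muh : #|mu :&: C| = h.
  apply: Q => //; apply/card_gt1P; exists x, y; by rewrite !inE xmu ymu xC yC.
have exh : [exists D in Cl, #|D :&: lam| == h].
  have [g gG gmu] := LT mu lam muL lamL.
  apply/existsP; exists (g @: C); rewrite inv //= -gmu card_imI setIC muh //.
have ex1 : [exists D in Cl, #|D :&: lam| == 1].
  case E1: [exists D in Cl, #|D :&: lam| == 1] => //; exfalso; move/negbT: E1 => no1.
  have no1' : forall m, m \in L -> #|C :&: m| != 1.
    move=> m mL; apply/negP => /eqP m1; apply: (negP no1).
    have [g gG gm] := LT m lam mL lamL.
    by apply/existsP; exists (g @: C); rewrite inv //= -gm card_imI m1.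
  apply: (core LS Lk k2 kP (cardP pCl Cd Cc) d1 (Cc C CCl) xC h2).
  move=> l lL xl; apply: Q => //.
  have : 0 < #|l :&: C| by apply/card_gt0P; exists x; rewrite inE xl xC.
  by have := no1' l lL; rewrite setIC; case: #|_| => [|[|n]].
rewrite specP.
case: (boolP (i == 1)) => [/eqP -> //|i1].
case: (boolP (i == h)) => [/eqP -> /=|ih /=]; first by rewrite exh andbT; lia.
apply/negP => /andP[i0 /existsP [D /andP[DCl /eqP E]]].
have : 2 <= #|D :&: lam| by rewrite E; lia.
by move/(QD D DCl lam lamL); rewrite E; apply/eqP.
Qed.

Lemma card3 (P : finType) (x y z : P) :
  x != y -> x != z -> y != z -> #|[set x; y; z]| = 3.
Proof.
move=> xy xz yz; rewrite -setUA cardsU1 cards2 yz !inE negb_or xy xz.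
by [].
Qed.

Theorem lemma5p2 (P : finType) (L : {set {set P}}) (k : nat)
  (G : {group {perm P}}) (Cl : {set {set P}}) (c d : nat) (C : {set P}) :
  linear_space L ->
  (forall l, l \in L -> #|l| = k) ->
  2 < k -> k < #|P| ->
  (forall g, g \in G -> is_aut L g) ->
  line_transitive L G ->
  G_invariant_partition G Cl ->
  #|Cl| = d -> (forall D, D \in Cl -> #|D| = c) ->
  1 < c -> 1 < d ->
  C \in Cl ->
  (induced_homogeneous G C 3 ->
     forall lam, lam \in L -> forall i, in_spec Cl lam i = (i == 1) || (i == 2)) /\
  (induced_homogeneous G C 2 ->
     exists2 h, 2 <= h &
       forall lam, lam \in L -> forall i, in_spec Cl lam i = (i == 1) || (i == h)).
Proof.
move=> LS Lk k2 kP aut LT GP Cd Cc c1 d1 CCl.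
have M := mainM LS Lk k2 kP aut LT GP Cd Cc c1 d1 CCl.
split.
- move=> H3; apply: M => // l lL l2.
  case: (ltngtP #|l :&: C| 2) => //; first by rewrite ltnNge l2.
  move=> l3; exfalso.
  apply: (no_full LS Lk k2 kP aut LT GP Cd Cc c1 d1 CCl lL).
  have [x [y [xlC ylC xy]]] : exists x y, [/\ x \in l :&: C, y \in l :&: C & x != y].
    by apply/card_gt1P.
  have : 0 < #|l :&: C :\ x :\ y|.
    rewrite cardD1in; last by rewrite in_setD1 eq_sym xy ylC.
    by rewrite cardD1in //; lia.
  case/card_gt0P => w; rewrite !inE => /and4P [wy wx wl wC].
  move: xlC ylC; rewrite !inE => /andP[xl xC] /andP[yl yC].
  apply/subsetP => z zC.
  case: (boolP (z == x)) => [/eqP -> //|zx].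
  case: (boolP (z == y)) => [/eqP -> //|zy].
  have sA : [set x; y; w] \subset C.
    by rewrite !subUset !sub1set xC yC ?wC ?zC.
  have sB : [set x; y; z] \subset C.
    by rewrite !subUset !sub1set xC yC ?wC ?zC.
  have cA : #|[set x; y; w]| = 3 by rewrite card3 // eq_sym.
  have cB : #|[set x; y; z]| = 3 by rewrite card3 // eq_sym.
  have [g gG [gC gA]] := H3 _ _ sA sB cA cB.
  have glL : g @: l \in L by apply: aut.
  have sl : [set x; y; w] \subset l by rewrite !subUset !sub1set xl yl wl.
  have gsl : [set x; y; z] \subset g @: l by rewrite -gA; apply: imsetS.
  have E : g @: l = l.
    apply: (line_uniq LS glL lL xy) => //.
      by apply: (subsetP gsl); rewrite !inE eqxx.
    by apply: (subsetP gsl); rewrite !inE eqxx orbT.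
  by rewrite -E; apply: (subsetP gsl); rewrite !inE eqxx !orbT.
- move=> H2.
  have [x [y [xC yC xy]]] : exists x y, [/\ x \in C, y \in C & x != y].
    by apply/card_gt1P; rewrite Cc.
  have [_ HL] := LS; have [mu [[muL [xmu ymu]] _]] := HL x y xy.
  have h2 : 2 <= #|mu :&: C|.
    by apply/card_gt1P; exists x, y; rewrite !inE xmu ymu xC yC.
  exists #|mu :&: C| => //.
  apply: M => // l lL l2.
  have [u [v [ulC vlC uv]]] : exists u v, [/\ u \in l :&: C, v \in l :&: C & u != v].
    by apply/card_gt1P.
  move: ulC vlC; rewrite !inE => /andP[ul uC] /andP[vl vC].
  have sA : [set x; y] \subset C by rewrite !subUset !sub1set xC yC.
  have sB : [set u; v] \subset C by rewrite !subUset !sub1set uC vC.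
  have cA : #|[set x; y]| = 2 by rewrite cards2 xy.
  have cB : #|[set u; v]| = 2 by rewrite cards2 uv.
  have [g gG [gC gA]] := H2 _ _ sA sB cA cB.
  have gmL : g @: mu \in L by apply: aut.
  have sm : [set x; y] \subset mu by rewrite !subUset !sub1set xmu ymu.
  have gsm : [set u; v] \subset g @: mu by rewrite -gA; apply: imsetS.
  have E : g @: mu = l.
    apply: (line_uniq LS gmL lL uv) => //.
      by apply: (subsetP gsm); rewrite !inE eqxx.
    by apply: (subsetP gsm); rewrite !inE eqxx orbT.
  by rewrite -E -[in LHS]gC card_imI.
Qed.
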